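(* Let $(M^4,g,I,J)$ be a nondegenerate generalized Kähler structure with angle function $p$ and Lee form $\theta=\theta_I$. Then $$\theta=\frac{1}{2(p^2-1)}\,dp\circ[I,J].$$
   Context: Generalized Kähler (GK) structure: $I,J$ are integrable complex structures and $g$ is Hermitian for both. With $\omega_I(X,Y)=g(X,IY)$ and $\omega_J(X,Y)=g(X,JY)$, one has $d^c_I\omega_I=H=-d^c_J\omega_J$ and $dH=0$, where $d^c=\sqrt{-1}(\bar\partial-\partial)$. The Lee form $\theta=\theta_I$ is defined by $d\omega_I=\theta\wedge\omega_I$. The angle function is $p=\frac14\operatorname{tr}(IJ)$. Nondegenerate means $g^{-1}[I,J]$ is nondegenerate; in dimension $4$ this is equivalent to $I,J$ inducing the same orientation with $|p|<1$. For a $1$-form $\alpha$ and an endomorphism $A$, $\alpha\circ A$ denotes $X\mapsto\alpha(AX)$. *)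

(* Defs.v *)
(* classical reals.  Everything is done in local coordinates on an
   open subset U of R^4 (the statement is pointwise/local). *)
From Stdlib Require Import Reals Lra ClassicalEpsilon.
Open Scope R_scope.

Definition pt := (R * R * R * R)%type.

Definition coord (x : pt) (i : nat) : R :=
  match x with (a, b, c, d) =>
    match i with 0 => a | 1 => b | 2 => c | 3 => d | _ => 0 end end.

Definition shift (x : pt) (i : nat) (t : R) : pt :=
  match x with (a, b, c, d) =>
    match i with
    | 0 => (a + t, b, c, d) | 1 => (a, b + t, c, d)
    | 2 => (a, b, c + t, d) | 3 => (a, b, c, d + t) | _ => x end end.

Definition close (y x : pt) (del : R) : Prop :=
  forall i, (i < 4)%nat -> Rabs (coord y i - coord x i) < del.

Definition is_open (U : pt -> Prop) : Prop :=
  forall x, U x -> exists del, 0 < del /\ forall y, close y x del -> U y.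

Definition cont_on (U : pt -> Prop) (f : pt -> R) : Prop :=
  forall x, U x -> forall eps, 0 < eps -> exists del, 0 < del /\
    forall y, U y -> close y x del -> Rabs (f y - f x) < eps.

(* i-th partial derivative of f at x (meaningful when it exists) *)
Definition pd (f : pt -> R) (i : nat) (x : pt) : R :=
  epsilon (inhabits 0) (fun l => derivable_pt_lim (fun t => f (shift x i t)) 0 l).

Fixpoint Ck (n : nat) (U : pt -> Prop) (f : pt -> R) : Prop :=
  cont_on U f /\
  match n with
  | 0 => True
  | S m => forall i, (i < 4)%nat ->
      (forall x, U x -> exists l, derivable_pt_lim (fun t => f (shift x i t)) 0 l)
      /\ Ck m U (fun x => pd f i x)
  end.

Definition smooth_on (U : pt -> Prop) (f : pt -> R) : Prop := forall n, Ck n U f.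

(* Tensor fields in components.  For an endomorphism field A,
   A x a b = A^a_b, i.e. (A X)^a = sum_b A x a b * X^b. *)
Definition sum4 (f : nat -> R) : R := f 0%nat + f 1%nat + f 2%nat + f 3%nat.

Definition comp (A B : nat -> nat -> R) (i j : nat) : R := sum4 (fun k => A i k * B k j).
Definition commut (A B : nat -> nat -> R) (i j : nat) : R := comp A B i j - comp B A i j.

Definition field1 := pt -> nat -> R.
Definition field2 := pt -> nat -> nat -> R.
Definition field3 := pt -> nat -> nat -> nat -> R.
Definition field4 := pt -> nat -> nat -> nat -> nat -> R.

Definition omega_of (g I : field2) : field2 :=
  fun x i j => sum4 (fun k => g x i k * I x k j).

(* exterior derivative (components of forms, no 1/k! factors) *)
Definition d0 (f : pt -> R) : field1 := fun x i => pd f i x.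
Definition d2 (w : field2) : field3 := fun x i j k =>
  pd (fun y => w y j k) i x - pd (fun y => w y i k) j x + pd (fun y => w y i j) k x.
Definition d3 (h : field3) : field4 := fun x i j k l =>
  pd (fun y => h y j k l) i x - pd (fun y => h y i k l) j x
  + pd (fun y => h y i j l) k x - pd (fun y => h y i j k) l x.

(* theta /\ omega for a 1-form and a 2-form (same convention as d) *)
Definition wedge12 (th : field1) (w : field2) : field3 := fun x i j k =>
  th x i * w x j k + th x j * w x k i + th x k * w x i j.

(* action of I on forms: (I a)(X1,..,Xk) = a(I X1,..,I Xk) *)
Definition act2 (I : field2) (w : field2) : field2 := fun x i j =>
  sum4 (fun k => sum4 (fun l => I x k i * I x l j * w x k l)).
Definition act3 (I : field2) (h : field3) : field3 := fun x a b c =>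
  sum4 (fun k => sum4 (fun l => sum4 (fun m =>
    I x k a * I x l b * I x m c * h x k l m))).

(* d^c = sqrt(-1)(dbar - d) = I^{-1} d I ; on 3-forms I^{-1} = - I *)
Definition dc (I : field2) (w : field2) : field3 := fun x a b c =>
  - act3 I (d2 (act2 I w)) x a b c.

Definition nijenhuis (I : field2) (x : pt) (i j k : nat) : R :=
  sum4 (fun l => I x l i * pd (fun y => I y k j) l x
               - I x l j * pd (fun y => I y k i) l x
               - I x k l * (pd (fun y => I y l j) i x - pd (fun y => I y l i) j x)).

Definition delta (i j : nat) : R := if Nat.eqb i j then 1 else 0.

Definition smooth_field2 (U : pt -> Prop) (A : field2) : Prop :=
  forall i j, (i < 4)%nat -> (j < 4)%nat -> smooth_on U (fun x => A x i j).

Definition complex_structure (U : pt -> Prop) (I : field2) : Prop :=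
  smooth_field2 U I /\
  (forall x, U x -> forall i j, (i < 4)%nat -> (j < 4)%nat ->
     comp (I x) (I x) i j = - delta i j) /\
  (forall x, U x -> forall i j k, (i < 4)%nat -> (j < 4)%nat -> (k < 4)%nat ->
     nijenhuis I x i j k = 0).

Definition riemannian_metric (U : pt -> Prop) (g : field2) : Prop :=
  smooth_field2 U g /\
  (forall x, U x -> forall i j, (i < 4)%nat -> (j < 4)%nat -> g x i j = g x j i) /\
  (forall x, U x -> forall v : nat -> R, (exists i, (i < 4)%nat /\ v i <> 0) ->
     0 < sum4 (fun i => sum4 (fun j => g x i j * v i * v j))).

Definition hermitian (U : pt -> Prop) (g I : field2) : Prop :=
  forall x, U x -> forall i j, (i < 4)%nat -> (j < 4)%nat ->
    sum4 (fun k => sum4 (fun l => I x k i * I x l j * g x k l)) = g x i j.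

Definition GK (U : pt -> Prop) (g I J : field2) : Prop :=
  riemannian_metric U g /\ complex_structure U I /\ complex_structure U J /\
  hermitian U g I /\ hermitian U g J /\
  exists H : field3,
    (forall x, U x -> forall a b c, (a < 4)%nat -> (b < 4)%nat -> (c < 4)%nat ->
       dc I (omega_of g I) x a b c = H x a b c /\
       H x a b c = - dc J (omega_of g J) x a b c) /\
    (forall x, U x -> forall a b c e, (a < 4)%nat -> (b < 4)%nat -> (c < 4)%nat ->
       (e < 4)%nat -> d3 H x a b c e = 0).

(* g^{-1}[I,J] nondegenerate (g^{-1} is an isomorphism, so this is the
   vanishing of the kernel of [I,J] at every point) *)
Definition nondegenerate (U : pt -> Prop) (I J : field2) : Prop :=
  forall x, U x -> forall v : nat -> R,
    (forall i, (i < 4)%nat -> sum4 (fun j => commut (I x) (J x) i j * v j) = 0) ->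
    forall i, (i < 4)%nat -> v i = 0.

Definition angle (I J : field2) (x : pt) : R := / 4 * sum4 (fun i => comp (I x) (J x) i i).

Definition lee_form (U : pt -> Prop) (g I : field2) (theta : field1) : Prop :=
  forall x, U x -> forall i j k, (i < 4)%nat -> (j < 4)%nat -> (k < 4)%nat ->
    d2 (omega_of g I) x i j k = wedge12 theta (omega_of g I) x i j k.

(* Main.v *)
Require Import Defs.
From Stdlib Require Import Reals.
Open Scope R_scope.
From Stdlib Require Import Lra Lia ClassicalEpsilon FunctionalExtensionality.
Require Import Defs.

Definition Mat := nat -> nat -> R.
Notation i0 := 0%nat. Notation i1 := 1%nat. Notation i2 := 2%nat. Notation i3 := 3%nat.

Ltac case4 i := destruct i as [|[|[|[|?]]]]; [| | | | exfalso; lia].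

Definition antisym4 (w : Mat) := forall i j, (i < 4)%nat -> (j < 4)%nat -> w i j = - w j i.

Definition Pf (w : Mat) := w i0 i1 * w i2 i3 - w i0 i2 * w i1 i3 + w i0 i3 * w i1 i2.
Definition Bf (v w : Mat) := v i0 i1 * w i2 i3 + w i0 i1 * v i2 i3 - v i0 i2 * w i1 i3
  - w i0 i2 * v i1 i3 + v i0 i3 * w i1 i2 + w i0 i3 * v i1 i2.
Definition wt (w : Mat) : Mat := fun i j =>
  match i, j with
  | 0,1 => w i2 i3 | 1,0 => - w i2 i3 | 0,2 => - w i1 i3 | 2,0 => w i1 i3
  | 0,3 => w i1 i2 | 3,0 => - w i1 i2 | 1,2 => w i0 i3 | 2,1 => - w i0 i3
  | 1,3 => - w i0 i2 | 3,1 => w i0 i2 | 2,3 => w i0 i1 | 3,2 => - w i0 i1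
  | _,_ => 0 end.

Ltac lowrw Hw :=
  repeat first [ rewrite (Hw 1 0)%nat by lia | rewrite (Hw 2 0)%nat by lia | rewrite (Hw 3 0)%nat by lia
               | rewrite (Hw 2 1)%nat by lia | rewrite (Hw 3 1)%nat by lia | rewrite (Hw 3 2)%nat by lia ].

Lemma antisym_diag (w : Mat) : antisym4 w -> forall i, (i < 4)%nat -> w i i = 0.
Proof. intros Hw i Hi. pose proof (Hw i i Hi Hi). lra. Qed.

Ltac diagrw Hw := repeat first [ rewrite (antisym_diag _ Hw 0)%nat by lia | rewrite (antisym_diag _ Hw 1)%nat by lia
   | rewrite (antisym_diag _ Hw 2)%nat by lia | rewrite (antisym_diag _ Hw 3)%nat by lia ].

Lemma wt_id (w : Mat) : antisym4 w -> forall i j, (i < 4)%nat -> (j < 4)%nat ->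
  comp w (wt w) i j = - Pf w * delta i j.
Proof.
  intros Hw i j Hi Hj.
  case4 i; case4 j; unfold comp, sum4, wt, Pf, delta; simpl; lowrw Hw; diagrw Hw; ring.
Qed.

Lemma wt_id2 (w : Mat) : antisym4 w -> forall i j, (i < 4)%nat -> (j < 4)%nat ->
  comp (wt w) w i j = - Pf w * delta i j.
Proof.
  intros Hw i j Hi Hj.
  case4 i; case4 j; unfold comp, sum4, wt, Pf, delta; simpl; lowrw Hw; diagrw Hw; ring.
Qed.

Lemma wt_pol (v w : Mat) : antisym4 v -> antisym4 w -> forall i j, (i < 4)%nat -> (j < 4)%nat ->
  comp v (wt w) i j + comp w (wt v) i j = - Bf v w * delta i j.
Proof.
  intros Hv Hw i j Hi Hj.
  case4 i; case4 j; unfold comp, sum4, wt, Bf, delta; simpl; lowrw Hv; lowrw Hw; diagrw Hv; diagrw Hw; ring.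
Qed.

Lemma sum4_zero (f : nat -> R) : (forall k, (k < 4)%nat -> f k = 0) -> sum4 f = 0.
Proof. intros H; unfold sum4; rewrite !H by lia; ring. Qed.

Lemma sum4_ext (f h : nat -> R) : (forall k, (k < 4)%nat -> f k = h k) -> sum4 f = sum4 h.
Proof. intros H; unfold sum4; rewrite !H by lia; ring. Qed.

Definition symm4 (g : Mat) := forall i j, (i < 4)%nat -> (j < 4)%nat -> g i j = g j i.

Ltac symrw Hg :=
  repeat first [ rewrite (Hg 1 0)%nat by lia | rewrite (Hg 2 0)%nat by lia | rewrite (Hg 3 0)%nat by lia
               | rewrite (Hg 2 1)%nat by lia | rewrite (Hg 3 1)%nat by lia | rewrite (Hg 3 2)%nat by lia ].

Definition eI2 (I : Mat) i j := comp I I i j + delta i j.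
Definition eH (g I : Mat) i j := sum4 (fun k => sum4 (fun l => I k i * I l j * g k l)) - g i j.
Definition cstr (I : Mat) := forall i j, (i < 4)%nat -> (j < 4)%nat -> comp I I i j = - delta i j.
Definition herm (g I : Mat) := forall i j, (i < 4)%nat -> (j < 4)%nat ->
  sum4 (fun k => sum4 (fun l => I k i * I l j * g k l)) = g i j.

Lemma eI2_0 I : cstr I -> forall i j, (i < 4)%nat -> (j < 4)%nat -> eI2 I i j = 0.
Proof. intros H i j Hi Hj; unfold eI2; rewrite H by lia; ring. Qed.
Lemma eH_0 g I : herm g I -> forall i j, (i < 4)%nat -> (j < 4)%nat -> eH g I i j = 0.
Proof. intros H i j Hi Hj; unfold eH; rewrite H by lia; ring. Qed.

Ltac zsum := repeat (rewrite sum4_zero; [| intros; idtac]).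

Lemma w_anti g I : symm4 g -> cstr I -> herm g I -> antisym4 (comp g I).
Proof.
  intros Hg HI HH i j Hi Hj.
  assert (E : comp g I i j + comp g I j i =
     sum4 (fun k => I k i * sum4 (fun m => g k m * eI2 I m j))
     - sum4 (fun k => eH g I i k * I k j)).
  { case4 i; case4 j; unfold eI2, eH, comp, sum4, delta; simpl; symrw Hg; ring. }
  assert (Z : sum4 (fun k => I k i * sum4 (fun m => g k m * eI2 I m j))
     - sum4 (fun k => eH g I i k * I k j) = 0).
  { rewrite (sum4_zero (fun k => I k i * _)).
    2:{ intros k Hk. rewrite sum4_zero. ring. intros m Hm. rewrite eI2_0 by auto. ring. }
    rewrite sum4_zero. ring. intros k Hk. rewrite eH_0 by auto. ring. }
  lra.
Qed.

Definition posdef (g : Mat) := forall v : nat -> R, (exists i, (i < 4)%nat /\ v i <> 0) ->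
  0 < sum4 (fun i => sum4 (fun j => g i j * v i * v j)).

Lemma posdef_zero g (u : nat -> R) : posdef g ->
  (forall a, (a < 4)%nat -> sum4 (fun k => g a k * u k) = 0) -> forall i, (i < 4)%nat -> u i = 0.
Proof.
  intros Hp Hu i Hi. destruct (Req_dec (u i) 0) as [|Hne]; auto. exfalso.
  assert (Q : sum4 (fun i => sum4 (fun j => g i j * u i * u j)) =
              sum4 (fun i => u i * sum4 (fun k => g i k * u k))) by (unfold sum4; ring).
  rewrite (sum4_zero (fun i => u i * _)) in Q.
  2:{ intros k Hk; rewrite Hu by auto; ring. }
  pose proof (Hp u (ex_intro _ i (conj Hi Hne))). lra.
Qed.

Lemma Pf_nz g I : symm4 g -> posdef g -> cstr I -> herm g I -> Pf (comp g I) <> 0.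
Proof.
  intros Hg Hp HI HH HP0.
  pose proof (w_anti g I Hg HI HH) as Hw.
  assert (Wt : forall m j, (m < 4)%nat -> (j < 4)%nat -> wt (comp g I) m j = 0).
  { intros m j Hm Hj.
    set (v := fun n => wt (comp g I) n j).
    set (u := fun k => sum4 (fun n => I k n * v n)).
    assert (Hu : forall i, (i < 4)%nat -> u i = 0).
    { apply (posdef_zero g u Hp). intros a Ha.
      transitivity (comp (comp g I) (wt (comp g I)) a j).
      { unfold u, v, comp, sum4. ring. }
      rewrite wt_id by auto. rewrite HP0. ring. }
    assert (C : sum4 (fun k => I m k * u k) = - v m + sum4 (fun n => eI2 I m n * v n)).
    { unfold u. case4 m; unfold eI2, comp, sum4, delta; simpl; ring. }
    rewrite (sum4_zero (fun k => I m k * u k)) in C.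
    2:{ intros k Hk; rewrite Hu by auto; ring. }
    rewrite (sum4_zero (fun n => eI2 I m n * v n)) in C.
    2:{ intros k Hk; rewrite eI2_0 by auto; ring. }
    unfold v in C. lra. }
  assert (W0 : forall i k, (i < 4)%nat -> (k < 4)%nat -> comp g I i k = 0).
  { pose proof (Wt 2%nat 3%nat ltac:(lia) ltac:(lia)) as A01.
    pose proof (Wt 1%nat 3%nat ltac:(lia) ltac:(lia)) as A02.
    pose proof (Wt 1%nat 2%nat ltac:(lia) ltac:(lia)) as A03.
    pose proof (Wt 0%nat 3%nat ltac:(lia) ltac:(lia)) as A12.
    pose proof (Wt 0%nat 2%nat ltac:(lia) ltac:(lia)) as A13.
    pose proof (Wt 0%nat 1%nat ltac:(lia) ltac:(lia)) as A23.
    cbv beta iota delta [wt] in A01, A02, A03, A12, A13, A23.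
    intros i k Hi Hk; case4 i; case4 k; try (apply antisym_diag; auto; lia);
      first [lra | rewrite Hw by lia; lra]. }
  assert (G0 : forall i j, (i < 4)%nat -> (j < 4)%nat -> g i j = 0).
  { intros i j Hi Hj.
    assert (E : g i j = sum4 (fun m => g i m * eI2 I m j) - sum4 (fun k => comp g I i k * I k j)).
    { case4 j; unfold eI2, comp, sum4, delta; simpl; ring. }
    rewrite (sum4_zero (fun m => g i m * eI2 I m j)) in E.
    2:{ intros k Hk; rewrite eI2_0 by auto; ring. }
    rewrite (sum4_zero (fun k => comp g I i k * I k j)) in E.
    2:{ intros k Hk; rewrite W0 by auto; ring. }
    lra. }
  pose proof (Hp (fun i => delta i 0%nat)) as H0.
  assert (Hex : exists i, (i < 4)%nat /\ delta i 0%nat <> 0).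
  { exists 0%nat. split. lia. unfold delta; simpl. lra. }
  specialize (H0 Hex).
  rewrite (sum4_zero (fun i => sum4 _)) in H0. lra.
  intros k Hk. apply sum4_zero. intros l Hl. rewrite G0 by auto. ring.
Qed.

Definition meq (A B : Mat) := forall i j, (i < 4)%nat -> (j < 4)%nat -> A i j = B i j.
Definition mplus (A B : Mat) : Mat := fun i j => A i j + B i j.
Definition msc (c : R) (A : Mat) : Mat := fun i j => c * A i j.

Lemma meq_refl A : meq A A. Proof. intros i j _ _; reflexivity. Qed.
Lemma meq_sym A B : meq A B -> meq B A. Proof. intros H i j Hi Hj; symmetry; auto. Qed.
Lemma meq_trans A B C : meq A B -> meq B C -> meq A C.
Proof. intros H1 H2 i j Hi Hj; rewrite H1 by auto; auto. Qed.
Lemma comp_assoc A B C i j : comp (comp A B) C i j = comp A (comp B C) i j.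
Proof. unfold comp, sum4; ring. Qed.
Lemma meq_assoc A B C : meq (comp (comp A B) C) (comp A (comp B C)).
Proof. intros i j _ _; apply comp_assoc. Qed.
Lemma meq_compl A A' B : meq A A' -> meq (comp A B) (comp A' B).
Proof. intros H i j Hi Hj; unfold comp; apply sum4_ext; intros k Hk; rewrite H by auto; ring. Qed.
Lemma meq_compr A B B' : meq B B' -> meq (comp A B) (comp A B').
Proof. intros H i j Hi Hj; unfold comp; apply sum4_ext; intros k Hk; rewrite H by auto; ring. Qed.
Lemma comp_dl A : meq (comp delta A) A.
Proof. intros i j Hi Hj; case4 i; unfold comp, sum4, delta; simpl; ring. Qed.
Lemma comp_dr A : meq (comp A delta) A.
Proof. intros i j Hi Hj; case4 j; unfold comp, sum4, delta; simpl; ring. Qed.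
Lemma comp_scl c A B : meq (comp (msc c A) B) (msc c (comp A B)).
Proof. intros i j _ _; unfold comp, msc, sum4; ring. Qed.
Lemma comp_scr c A B : meq (comp A (msc c B)) (msc c (comp A B)).
Proof. intros i j _ _; unfold comp, msc, sum4; ring. Qed.
Lemma meq_msc c A B : meq A B -> meq (msc c A) (msc c B).
Proof. intros H i j Hi Hj; unfold msc; rewrite H; auto. Qed.
Lemma comp_plusl A B C : meq (comp (mplus A B) C) (mplus (comp A C) (comp B C)).
Proof. intros i j _ _; unfold comp, mplus, sum4; ring. Qed.
Lemma comp_plusr A B C : meq (comp A (mplus B C)) (mplus (comp A B) (comp A C)).
Proof. intros i j _ _; unfold comp, mplus, sum4; ring. Qed.
Lemma meq_plus A A' B B' : meq A A' -> meq B B' -> meq (mplus A B) (mplus A' B').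
Proof. intros H1 H2 i j Hi Hj; unfold mplus; rewrite H1, H2; auto. Qed.

Definition mneg1 : Mat := msc (-1) delta.
Lemma cstr_meq I : cstr I -> meq (comp I I) mneg1.
Proof. intros H i j Hi Hj; rewrite H by auto; unfold mneg1, msc; ring. Qed.

Definition Ginv (g I : Mat) : Mat := msc (- / Pf (comp g I)) (comp I (wt (comp g I))).

Lemma Ginv_r g I : symm4 g -> posdef g -> cstr I -> herm g I -> meq (comp g (Ginv g I)) delta.
Proof.
  intros Hg Hp HI HH. pose proof (Pf_nz g I Hg Hp HI HH) as Hnz.
  pose proof (w_anti g I Hg HI HH) as Hw.
  intros i j Hi Hj. unfold Ginv.
  rewrite comp_scr by auto. unfold msc. rewrite <- comp_assoc. rewrite wt_id by auto. field. auto.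
Qed.

Lemma g_from_w g I : cstr I -> meq g (msc (-1) (comp (comp g I) I)).
Proof.
  intros HI i j Hi Hj. unfold msc. rewrite comp_assoc.
  transitivity (- comp g (comp I I) i j).
  2:{ ring. }
  assert (meq (comp g (comp I I)) (comp g mneg1)) as E by (apply meq_compr, cstr_meq; auto).
  rewrite E by auto. unfold mneg1. rewrite comp_scr by auto. unfold msc. rewrite comp_dr by auto. ring.
Qed.

Lemma wt_id_m w : antisym4 w -> meq (comp w (wt w)) (msc (- Pf w) delta).
Proof. intros Hw i j Hi Hj. rewrite wt_id by auto. unfold msc; ring. Qed.
Lemma wt_id2_m w : antisym4 w -> meq (comp (wt w) w) (msc (- Pf w) delta).
Proof. intros Hw i j Hi Hj. rewrite wt_id2 by auto. unfold msc; ring. Qed.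

Lemma Ginv_l g I : symm4 g -> posdef g -> cstr I -> herm g I -> meq (comp (Ginv g I) g) delta.
Proof.
  intros Hg Hp HI HH. pose proof (Pf_nz g I Hg Hp HI HH) as Hnz.
  pose proof (w_anti g I Hg HI HH) as Hw.
  set (w := comp g I) in *.
  intros i j Hi Hj.
  rewrite (meq_compr _ _ _ (g_from_w g I HI)) by auto.
  transitivity (/ Pf w * comp I (comp (comp (wt w) w) I) i j).
  { unfold Ginv. fold w. unfold comp, msc, sum4. ring. }
  rewrite (meq_compr _ _ _ (meq_compl _ _ _ (wt_id2_m w Hw))) by auto.
  transitivity (/ Pf w * (- Pf w) * comp I (comp delta I) i j).
  { unfold comp, msc, sum4. ring. }
  rewrite (meq_compr _ _ _ (comp_dl I)) by auto. rewrite HI by auto. field. auto.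
Qed.

Lemma wt_formula g X G : cstr X -> antisym4 (comp g X) -> meq (comp G g) delta ->
  meq (wt (comp g X)) (msc (Pf (comp g X)) (comp X G)).
Proof.
  intros HX Hw HGg.
  set (w := comp g X) in *.
  (* wt = - (X G) (w wt) *)
  assert (E1 : meq (comp (comp X G) w) (msc (-1) delta)).
  { intros i j Hi Hj.
    transitivity (comp X (comp (comp G g) X) i j); [unfold w, comp, sum4; ring|].
    rewrite (meq_compr _ _ _ (meq_compl _ _ _ HGg)) by auto.
    rewrite (meq_compr _ _ _ (comp_dl X)) by auto. rewrite HX by auto. unfold msc; ring. }
  intros i j Hi Hj.
  transitivity (- comp (comp (comp X G) w) (wt w) i j).
  { rewrite (meq_compl _ _ _ E1) by auto. rewrite comp_scl by auto. unfold msc.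
    rewrite comp_dl by auto. ring. }
  rewrite comp_assoc. rewrite (meq_compr _ _ _ (wt_id_m w Hw)) by auto.
  rewrite comp_scr by auto. unfold msc. rewrite comp_dr by auto. ring.
Qed.

Lemma comp_scl' c A B i j : comp (msc c A) B i j = c * comp A B i j.
Proof. unfold comp, msc, sum4; ring. Qed.
Lemma comp_scr' c A B i j : comp A (msc c B) i j = c * comp A B i j.
Proof. unfold comp, msc, sum4; ring. Qed.

Definition pz (I J : Mat) := / 4 * sum4 (fun i => comp I J i i).

Definition nondeg (I J : Mat) := forall v : nat -> R,
  (forall i, (i < 4)%nat -> sum4 (fun j => commut I J i j * v j) = 0) ->
  forall i, (i < 4)%nat -> v i = 0.

Lemma step1 g I J : symm4 g -> posdef g -> cstr I -> herm g I -> cstr J -> herm g J ->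
  forall i j, (i < 4)%nat -> (j < 4)%nat ->
  Pf (comp g J) * comp I J i j + Pf (comp g I) * comp J I i j = - Bf (comp g I) (comp g J) * delta i j.
Proof.
  intros Hg Hp HI HHI HJ HHJ.
  pose proof (w_anti g I Hg HI HHI) as HwI. pose proof (w_anti g J Hg HJ HHJ) as HwJ.
  set (G := Ginv g I). pose proof (Ginv_l g I Hg Hp HI HHI) as HGg. fold G in HGg.
  set (wI := comp g I) in *. set (wJ := comp g J) in *.
  set (Pm := mplus (comp wI (wt wJ)) (comp wJ (wt wI))).
  assert (Hpol : meq Pm (msc (- Bf wI wJ) delta)).
  { intros i j Hi Hj. unfold Pm, mplus, msc. rewrite wt_pol by auto. ring. }
  assert (Hsub : meq Pm (mplus (comp wI (msc (Pf wJ) (comp J G))) (comp wJ (msc (Pf wI) (comp I G))))).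
  { apply meq_plus; apply meq_compr; apply wt_formula; auto. }
  intros i j Hi Hj.
  assert (A : comp (comp G Pm) g i j = - Bf wI wJ * delta i j).
  { rewrite (meq_compl _ _ _ (meq_compr _ _ _ Hpol)) by auto.
    rewrite (meq_compl _ _ _ (comp_scr _ _ _)) by auto. rewrite comp_scl'.
    rewrite (meq_compl _ _ _ (comp_dr _)) by auto. rewrite HGg by auto. ring. }
  assert (B : comp (comp G Pm) g i j = Pf wJ * comp I J i j + Pf wI * comp J I i j).
  { rewrite (meq_compl _ _ _ (meq_compr _ _ _ Hsub)) by auto.
    transitivity (Pf wJ * comp (comp G g) (comp (comp I J) (comp G g)) i j
                + Pf wI * comp (comp G g) (comp (comp J I) (comp G g)) i j).
    { unfold wI, wJ, comp, mplus, msc, sum4. ring. }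
    rewrite !(meq_compl _ _ _ HGg) by auto.
    rewrite !(meq_compr _ _ _ (meq_compr _ _ _ HGg)) by auto.
    rewrite !comp_dl by auto. rewrite !comp_dr by auto. ring. }
  rewrite <- B, A. ring.
Qed.

Lemma orient g I J : symm4 g -> posdef g -> cstr I -> herm g I -> cstr J -> herm g J -> nondeg I J ->
  Pf (comp g I) = Pf (comp g J) /\
  Bf (comp g I) (comp g J) + 2 * pz I J * Pf (comp g I) = 0 /\
  (forall i j, (i < 4)%nat -> (j < 4)%nat -> comp I J i j + comp J I i j = 2 * pz I J * delta i j).
Proof.
  intros Hg Hp HI HHI HJ HHJ Hnd.
  pose proof (step1 g I J Hg Hp HI HHI HJ HHJ) as S1.
  pose proof (Pf_nz g I Hg Hp HI HHI) as Hnz.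
  set (a := Pf (comp g I)) in *. set (b := Pf (comp g J)) in *. set (B := Bf (comp g I) (comp g J)) in *.
  clearbody a b B.
  assert (S2 : forall i j, (i < 4)%nat -> (j < 4)%nat -> b * comp J I i j + a * comp I J i j = - B * delta i j).
  { intros i j Hi Hj.
    assert (E : b * comp J I i j + a * comp I J i j + B * delta i j =
       - sum4 (fun k => I i k * sum4 (fun l => (b * comp I J k l + a * comp J I k l + B * delta k l) * I l j))
       + sum4 (fun k => eI2 I i k * (b * comp J I k j))
       + sum4 (fun k => a * comp I J i k * eI2 I k j)
       + B * eI2 I i j).
    { case4 i; case4 j; unfold eI2, comp, sum4, delta; simpl; ring. }
    rewrite (sum4_zero (fun k => I i k * _)) in E.
    2:{ intros k Hk. apply Rmult_eq_0_compat_l. apply sum4_zero. intros l Hl.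
        rewrite S1 by auto. ring. }
    rewrite (sum4_zero (fun k => eI2 I i k * _)) in E.
    2:{ intros k Hk. rewrite eI2_0 by auto. ring. }
    rewrite (sum4_zero (fun k => a * comp I J i k * _)) in E.
    2:{ intros k Hk. rewrite eI2_0 by auto. ring. }
    rewrite eI2_0 in E by auto. lra. }
  assert (Hab : a = b).
  { destruct (Req_dec a b) as [|Hne]; auto. exfalso.
    assert (C0 : forall i j, (i < 4)%nat -> (j < 4)%nat -> commut I J i j = 0).
    { intros i j Hi Hj. pose proof (S1 i j Hi Hj). pose proof (S2 i j Hi Hj).
      unfold commut. apply (Rmult_eq_reg_l (b - a)). 2:{ intro; apply Hne; lra. }
      rewrite Rmult_0_r. lra. }
    assert (V := Hnd (fun j => delta j 0%nat)).
    assert (V0 : (fun j => delta j 0%nat) 0%nat = 0).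
    { apply V. 2: lia. intros i Hi. apply sum4_zero. intros k Hk. rewrite C0 by auto. ring. }
    unfold delta in V0; simpl in V0. lra. }
  assert (Hs : forall i j, (i < 4)%nat -> (j < 4)%nat -> a * (comp I J i j + comp J I i j) = - B * delta i j).
  { intros i j Hi Hj. rewrite <- S1 by auto. rewrite Hab. ring. }
  assert (Hp4 : a * (8 * pz I J) = -4 * B).
  { assert (Hsum : sum4 (fun i => a * (comp I J i i + comp J I i i)) = sum4 (fun i => - B * delta i i))
      by (apply sum4_ext; intros; apply Hs; auto).
    unfold pz. transitivity (sum4 (fun i => a * (comp I J i i + comp J I i i))).
    { assert (H8 : 8 * / 4 = 2) by lra.
      transitivity (a * ((8 * / 4) * sum4 (fun i => comp I J i i))); [ring|].
      rewrite H8. unfold comp, sum4. ring. }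
    rewrite Hsum. unfold sum4, delta; simpl. ring. }
  split; [auto|]. split.
  { assert (B = -2 * pz I J * a) by lra. lra. }
  intros i j Hi Hj. apply (Rmult_eq_reg_l a); auto.
  rewrite Hs by auto. assert (B = -2 * pz I J * a) by lra. rewrite H. ring.
Qed.

Definition eS (I J : Mat) i j := comp I J i j + comp J I i j - 2 * pz I J * delta i j.

Lemma C2 I J : cstr I -> cstr J ->
  (forall i j, (i < 4)%nat -> (j < 4)%nat -> comp I J i j + comp J I i j = 2 * pz I J * delta i j) ->
  forall i j, (i < 4)%nat -> (j < 4)%nat ->
  comp (commut I J) (commut I J) i j = 4 * (pz I J ^ 2 - 1) * delta i j.
Proof.
  intros HI HJ HS.
  assert (HeS : forall i j, (i < 4)%nat -> (j < 4)%nat -> eS I J i j = 0).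
  { intros i j Hi Hj; unfold eS; rewrite HS by auto; ring. }
  intros i j Hi Hj.
  set (p := pz I J).
  assert (E : comp (commut I J) (commut I J) i j - 4 * (p ^ 2 - 1) * delta i j =
    4 * sum4 (fun k => I i k * sum4 (fun l => eS I J k l * J l j))
    - 4 * sum4 (fun k => eI2 I i k * eI2 J k j) + 4 * eI2 I i j + 4 * eI2 J i j
    - 2 * sum4 (fun k => comp I J i k * eS I J k j) + 4 * p * eS I J i j
    - 2 * sum4 (fun k => eS I J i k * comp I J k j) + sum4 (fun k => eS I J i k * eS I J k j)).
  { unfold eS, eI2. fold p. case4 i; case4 j; unfold commut, comp, sum4, delta; simpl; ring. }
  rewrite !(sum4_zero (fun k => _ * eS I J k j)) in E by (intros; rewrite HeS by auto; ring).
  rewrite !(sum4_zero (fun k => eS I J i k * _)) in E by (intros; rewrite HeS by auto; ring).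
  rewrite (sum4_zero (fun k => I i k * _)) in E.
  2:{ intros k Hk. rewrite sum4_zero. ring. intros; rewrite HeS by auto; ring. }
  rewrite (sum4_zero (fun k => eI2 I i k * _)) in E by (intros; rewrite eI2_0 by auto; ring).
  rewrite (eI2_0 I), (eI2_0 J), (HeS i j) in E by auto. lra.
Qed.

Lemma p2_ne1 I J : nondeg I J ->
  (forall i j, (i < 4)%nat -> (j < 4)%nat ->
     comp (commut I J) (commut I J) i j = 4 * (pz I J ^ 2 - 1) * delta i j) ->
  pz I J ^ 2 - 1 <> 0.
Proof.
  intros Hnd HC Hp.
  set (v := fun j => commut I J j 0%nat).
  assert (Hv : forall i, (i < 4)%nat -> v i = 0).
  { apply Hnd. intros i Hi. unfold v. fold (comp (commut I J) (commut I J) i 0%nat).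
    rewrite HC by (auto; lia). rewrite Hp. ring. }
  assert (V0 := Hnd (fun j => delta j 0%nat)).
  assert (Z : (fun j => delta j 0%nat) 0%nat = 0).
  { apply V0. 2: lia. intros i Hi. rewrite <- (Hv i Hi). unfold v, sum4, delta; simpl. ring. }
  unfold delta in Z; simpl in Z; lra.
Qed.

Definition Jet := nat -> Mat.

Definition dgs (dg : Jet) : Jet := fun l i j => / 2 * (dg l i j + dg l j i).
Definition Gm (dg : Jet) m l b := / 2 * (dgs dg l m b + dgs dg b m l - dgs dg m l b).
Definition Om (g I : Mat) (dg dI : Jet) : Jet := fun l b c =>
  sum4 (fun k => dgs dg l b k * I k c + g b k * dI l k c).
Definition Am (g I : Mat) (dg dI : Jet) : Jet := fun l b c =>
  Om g I dg dI l b c - sum4 (fun m => Gm dg m l b * I m c) + sum4 (fun m => Gm dg m l c * I m b).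
Definition Dd (Om : Jet) i j k := Om i j k - Om j i k + Om k i j.

Definition edI (I : Mat) (dI : Jet) l i j := sum4 (fun k => dI l i k * I k j + I i k * dI l k j).
Definition edH (g I : Mat) (dg dI : Jet) l i j :=
  sum4 (fun k => sum4 (fun m => dI l k i * I m j * g k m + I k i * dI l m j * g k m
                                + I k i * I m j * dgs dg l k m)) - dgs dg l i j.
Definition jdI (I : Mat) (dI : Jet) := forall l i j, (l < 4)%nat -> (i < 4)%nat -> (j < 4)%nat -> edI I dI l i j = 0.
Definition jdH (g I : Mat) (dg dI : Jet) := forall l i j, (l < 4)%nat -> (i < 4)%nat -> (j < 4)%nat -> edH g I dg dI l i j = 0.

Lemma rII I : cstr I -> forall (Y : nat -> R) c, (c < 4)%nat -> sum4 (fun m => Y m * comp I I m c) + Y c = 0.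
Proof. intros HI Y c Hc. unfold sum4. rewrite !HI by lia. case4 c; unfold delta; simpl; ring. Qed.
Lemma lII I : cstr I -> forall (Y : nat -> R) b, (b < 4)%nat -> sum4 (fun m => comp I I b m * Y m) + Y b = 0.
Proof. intros HI Y b Hb. unfold sum4. rewrite !HI by lia. case4 b; unfold delta; simpl; ring. Qed.
Lemma mul0l a b : a = 0 -> a * b = 0. Proof. intros ->; ring. Qed.
Lemma mul0r a b : b = 0 -> a * b = 0. Proof. intros ->; ring. Qed.
Lemma s0 f : (forall k, (k < 4)%nat -> f k = 0) -> sum4 f = 0.
Proof. apply sum4_zero. Qed.
Lemma sub0 a b : a = 0 -> b = 0 -> a - b = 0. Proof. intros -> ->; ring. Qed.
Lemma add0 a b : a = 0 -> b = 0 -> a + b = 0. Proof. intros -> ->; ring. Qed.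
Lemma opp0 a : a = 0 -> - a = 0. Proof. intros ->; ring. Qed.

Ltac split0 := repeat match goal with |- (_ + _) = 0 => apply add0 | |- (_ - _) = 0 => apply sub0 | |- - _ = 0 => apply opp0 end.

Lemma Om_anti g I dg dI : symm4 g -> cstr I -> herm g I -> jdI I dI -> jdH g I dg dI ->
  forall l b c, (l < 4)%nat -> (b < 4)%nat -> (c < 4)%nat -> Om g I dg dI l b c = - Om g I dg dI l c b.
Proof.
  intros Hg HI HH HdI HdH l b c Hl Hb Hc.
  assert (E : Om g I dg dI l b c + Om g I dg dI l c b =
    sum4 (fun k => dI l k b * (sum4 (fun m => g k m * comp I I m c) + g k c))
    + sum4 (fun k => I k b * (sum4 (fun m => dgs dg l k m * comp I I m c) + dgs dg l k c))
    + sum4 (fun k => I k b * sum4 (fun m => g k m * edI I dI l m c))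
    - sum4 (fun k => edH g I dg dI l b k * I k c)
    - sum4 (fun k => eH g I b k * dI l k c)
    + sum4 (fun k => dI l k b * (g c k - g k c))).
  { unfold Om, edI, edH, eH, dgs, comp, sum4. ring. }
  assert (Z : sum4 (fun k => dI l k b * (sum4 (fun m => g k m * comp I I m c) + g k c))
    + sum4 (fun k => I k b * (sum4 (fun m => dgs dg l k m * comp I I m c) + dgs dg l k c))
    + sum4 (fun k => I k b * sum4 (fun m => g k m * edI I dI l m c))
    - sum4 (fun k => edH g I dg dI l b k * I k c)
    - sum4 (fun k => eH g I b k * dI l k c)
    + sum4 (fun k => dI l k b * (g c k - g k c)) = 0).
  { split0; apply s0; intros k Hk.
    - apply mul0r; apply (rII I HI (fun m => g k m)); auto.
    - apply mul0r; apply (rII I HI (fun m => dgs dg l k m)); auto.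
    - apply mul0r; apply s0; intros m Hm; apply mul0r; apply HdI; auto.
    - apply mul0l; apply HdH; auto.
    - apply mul0l; apply eH_0; auto.
    - apply mul0r; rewrite Hg by auto; ring. }
  lra.
Qed.

Lemma Am_anti g I dg dI : symm4 g -> cstr I -> herm g I -> jdI I dI -> jdH g I dg dI ->
  forall l b c, (l < 4)%nat -> (b < 4)%nat -> (c < 4)%nat -> Am g I dg dI l b c = - Am g I dg dI l c b.
Proof.
  intros Hg HI HH HdI HdH l b c Hl Hb Hc.
  assert (E : Am g I dg dI l b c + Am g I dg dI l c b = Om g I dg dI l b c + Om g I dg dI l c b)
    by (unfold Am; ring).
  rewrite (Om_anti g I dg dI) in E by auto. lra.
Qed.

Lemma cyc g I dg dI : symm4 g -> cstr I -> herm g I -> jdI I dI -> jdH g I dg dI ->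
  forall l b c, (l < 4)%nat -> (b < 4)%nat -> (c < 4)%nat ->
  Dd (Om g I dg dI) l b c = Am g I dg dI l b c + Am g I dg dI b c l + Am g I dg dI c l b.
Proof.
  intros Hg HI HH HdI HdH l b c Hl Hb Hc.
  assert (E : Dd (Om g I dg dI) l b c = Am g I dg dI l b c + Am g I dg dI b c l + Am g I dg dI c l b
             - (Om g I dg dI b l c + Om g I dg dI b c l)).
  { unfold Dd, Am, Gm, dgs, sum4. ring. }
  rewrite (Om_anti g I dg dI Hg HI HH HdI HdH b l c) in E by auto. lra.
Qed.

Definition typ (I : Mat) (A : Jet) l b c := sum4 (fun m => sum4 (fun n => I m b * I n c * A l m n)).

Lemma Am_type g I dg dI : cstr I -> herm g I -> jdI I dI ->
  forall l b c, (l < 4)%nat -> (b < 4)%nat -> (c < 4)%nat ->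
  typ I (Am g I dg dI) l b c = - Am g I dg dI l b c.
Proof.
  intros HI HH HdI l b c Hl Hb Hc.
  assert (E : typ I (Am g I dg dI) l b c + Am g I dg dI l b c =
     sum4 (fun k => I k b * sum4 (fun m => g k m * edI I dI l m c))
     - sum4 (fun k => eH g I b k * dI l k c)
     + sum4 (fun k => I k b * (sum4 (fun m => Gm dg k l m * comp I I m c) + Gm dg k l c))
     + sum4 (fun m => I m c * (sum4 (fun k => Gm dg k l m * comp I I k b) + Gm dg b l m))).
  { unfold typ, Am, Om, edI, eH, Gm, dgs, comp, sum4. field. }
  assert (Z : sum4 (fun k => I k b * sum4 (fun m => g k m * edI I dI l m c))
     - sum4 (fun k => eH g I b k * dI l k c)
     + sum4 (fun k => I k b * (sum4 (fun m => Gm dg k l m * comp I I m c) + Gm dg k l c))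
     + sum4 (fun m => I m c * (sum4 (fun k => Gm dg k l m * comp I I k b) + Gm dg b l m)) = 0).
  { split0; apply s0; intros k Hk.
    - apply mul0r; apply s0; intros m Hm; apply mul0r; apply HdI; auto.
    - apply mul0l; apply eH_0; auto.
    - apply mul0r; apply (rII I HI (fun m => Gm dg k l m)); auto.
    - apply mul0r; apply (rII I HI (fun m => Gm dg m l k)); auto. }
  lra.
Qed.

Definition nijp (I : Mat) (dI : Jet) i j k :=
  sum4 (fun l => I l i * dI l k j - I l j * dI l k i - I k l * (dI i l j - dI j l i)).
Definition EN (I : Mat) (A : Jet) a b c :=
  sum4 (fun l => I l b * A l a c) - sum4 (fun l => I l c * A l a b)
  + sum4 (fun m => A b a m * I m c) - sum4 (fun m => A c a m * I m b).

Lemma EN_zero g I dg dI : cstr I -> jdI I dI ->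
  (forall i j k, (i < 4)%nat -> (j < 4)%nat -> (k < 4)%nat -> nijp I dI i j k = 0) ->
  forall a b c, (a < 4)%nat -> (b < 4)%nat -> (c < 4)%nat -> EN I (Am g I dg dI) a b c = 0.
Proof.
  intros HI HdI HN a b c Ha Hb Hc.
  assert (E : sum4 (fun k => g a k * nijp I dI b c k) = EN I (Am g I dg dI) a b c
     - sum4 (fun k => g a k * edI I dI b k c) + sum4 (fun k => g a k * edI I dI c k b)
     - (sum4 (fun k => Gm dg a b k * comp I I k c) + Gm dg a b c)
     + (sum4 (fun k => Gm dg a c k * comp I I k b) + Gm dg a c b)).
  { unfold EN, nijp, Am, Om, edI, Gm, dgs, comp, sum4. field. }
  rewrite (s0 (fun k => g a k * nijp I dI b c k)) in E by (intros; apply mul0r; apply HN; auto).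
  rewrite (s0 (fun k => g a k * edI I dI b k c)) in E by (intros; apply mul0r; apply HdI; auto).
  rewrite (s0 (fun k => g a k * edI I dI c k b)) in E by (intros; apply mul0r; apply HdI; auto).
  rewrite (rII I HI (fun k => Gm dg a b k) c Hc) in E.
  rewrite (rII I HI (fun k => Gm dg a c k) b Hb) in E.
  lra.
Qed.

Definition Dc (A : Jet) i j k := A i j k + A j k i + A k i j.

Lemma gray_pure (I : Mat) (A : Jet) X Y Z :
  2 * A X Y Z - Dc A X Y Z + sum4 (fun m => sum4 (fun n => I m Y * I n Z * Dc A X m n)) =
  (A X Y Z + typ I A X Y Z) - sum4 (fun n => I n Z * EN I A X Y n)
  + sum4 (fun l => sum4 (fun n => I l Y * I n Z * (A l X n + A l n X)))
  - (sum4 (fun l => A l X Y * comp I I l Z) + A Z X Y)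
  + (sum4 (fun m => A Y X m * comp I I m Z) + A Y X Z)
  - (A Y X Z + A Y Z X).
Proof. unfold Dc, typ, EN, comp, sum4. ring. Qed.

Definition antiJ (A : Jet) := forall l b c, (l < 4)%nat -> (b < 4)%nat -> (c < 4)%nat -> A l b c = - A l c b.

Lemma gray_abs (I : Mat) (A : Jet) : cstr I -> antiJ A ->
  (forall l b c, (l < 4)%nat -> (b < 4)%nat -> (c < 4)%nat -> typ I A l b c = - A l b c) ->
  (forall a b c, (a < 4)%nat -> (b < 4)%nat -> (c < 4)%nat -> EN I A a b c = 0) ->
  forall X Y Z, (X < 4)%nat -> (Y < 4)%nat -> (Z < 4)%nat ->
  2 * A X Y Z = Dc A X Y Z - sum4 (fun m => sum4 (fun n => I m Y * I n Z * Dc A X m n)).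
Proof.
  intros HI Ha Ht HE X Y Z HX HY HZ.
  pose proof (gray_pure I A X Y Z) as E.
  rewrite Ht in E by auto.
  rewrite (s0 (fun n => I n Z * EN I A X Y n)) in E by (intros; apply mul0r; apply HE; auto).
  rewrite (s0 (fun l => sum4 (fun n => I l Y * I n Z * (A l X n + A l n X)))) in E.
  2:{ intros l Hl. apply s0. intros n Hn. apply mul0r. rewrite (Ha l X n) by auto. ring. }
  rewrite (rII I HI (fun l => A l X Y) Z HZ) in E.
  rewrite (rII I HI (fun m => A Y X m) Z HZ) in E.
  rewrite (Ha Y X Z) in E by auto. lra.
Qed.

Definition Vec := nat -> R.
Definition wedge1 (a b : Vec) : Mat := fun i j => a i * b j - a j * b i.
Definition wdg (t : Vec) (w : Mat) i j k := t i * w j k + t j * w k i + t k * w i j.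
Definition act2p (X w : Mat) i j := sum4 (fun k => sum4 (fun l => X k i * X l j * w k l)).
Definition act3p (X : Mat) (h : nat -> nat -> nat -> R) a b c :=
  sum4 (fun k => sum4 (fun l => sum4 (fun m => X k a * X l b * X m c * h k l m))).
Definition vm (t : Vec) (X : Mat) : Vec := fun i => sum4 (fun k => t k * X k i).

Lemma Bf_wedge (a b : Vec) (w : Mat) :
  Bf (wedge1 a b) w = sum4 (fun i => sum4 (fun j => a i * wt w i j * b j)).
Proof. unfold Bf, wedge1, sum4, wt. simpl. ring. Qed.

Lemma w_inv g X : symm4 g -> cstr X -> herm g X -> meq (act2p X (comp g X)) (comp g X).
Proof.
  intros Hg HX HH i j Hi Hj.
  pose proof (w_anti g X Hg HX HH i j Hi Hj) as Ha.
  assert (E : act2p X (comp g X) i j = - sum4 (fun k => X k i * g k j)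
     + sum4 (fun k => X k i * (sum4 (fun n => g k n * comp X X n j) + g k j))).
  { unfold act2p, comp, sum4. ring. }
  rewrite (s0 (fun k => X k i * (sum4 (fun n => g k n * comp X X n j) + g k j))) in E by (intros; apply mul0r; apply (rII X HX (fun n => g k n)); auto).
  assert (E2 : comp g X j i = sum4 (fun k => X k i * g k j)).
  { unfold comp. apply sum4_ext. intros k Hk. rewrite Hg by auto. ring. }
  lra.
Qed.

Definition Gr (X : Mat) (h : nat -> nat -> nat -> R) l b c :=
  / 2 * (h l b c - sum4 (fun m => sum4 (fun n => X m b * X n c * h l m n))).

Lemma Gr_wdg g X (t : Vec) : symm4 g -> cstr X -> herm g X ->
  forall l b c, (l < 4)%nat -> (b < 4)%nat -> (c < 4)%nat ->
  Gr X (wdg t (comp g X)) l b c =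
  / 2 * (wedge1 t (fun c => comp g X c l) b c - wedge1 (vm t X) (fun c => g c l) b c).
Proof.
  intros Hg HX HH l b c Hl Hb Hc.
  set (w := comp g X).
  assert (E : Gr X (wdg t w) l b c - / 2 * (wedge1 t (fun c => w c l) b c - wedge1 (vm t X) (fun c => g c l) b c) =
    / 2 * (- t l * (act2p X w b c - w b c)
      - vm t X b * eH g X c l
      - vm t X c * (sum4 (fun k => g l k * comp X X k b) + g l b)
      + t c * (w l b + w b l) + vm t X c * (g l b - g b l))).
  { unfold Gr, wdg, wedge1, act2p, vm, eH, w, comp, sum4. field. }
  unfold w in E.
  rewrite (w_inv g X Hg HX HH) in E by auto.
  rewrite (eH_0 g X HH) in E by auto.
  rewrite (rII X HX (fun k => g l k) b Hb) in E.
  rewrite (w_anti g X Hg HX HH l b) in E by auto.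
  rewrite (Hg b l) in E by auto. unfold w. lra.
Qed.

Lemma act3_wdg X t w a b c : act3p X (wdg t w) a b c = wdg (vm t X) (act2p X w) a b c.
Proof. unfold act3p, wdg, vm, act2p, sum4. ring. Qed.

Lemma act3_ext X h h' : (forall a b c, (a < 4)%nat -> (b < 4)%nat -> (c < 4)%nat -> h a b c = h' a b c) ->
  forall a b c, act3p X h a b c = act3p X h' a b c.
Proof.
  intros H a b c. unfold act3p. apply sum4_ext; intros k Hk. apply sum4_ext; intros l Hl.
  apply sum4_ext; intros m Hm. rewrite H by auto. ring.
Qed.

Definition T3 := nat -> nat -> nat -> R.
Definition A1 (X : Mat) (h : T3) : T3 := fun a l m => sum4 (fun k => X k a * h k l m).
Definition A2 (X : Mat) (h : T3) : T3 := fun k b m => sum4 (fun l => X l b * h k l m).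
Definition A3 (X : Mat) (h : T3) : T3 := fun k l c => sum4 (fun m => X m c * h k l m).
Lemma act3_A X h : act3p X h = A1 X (A2 X (A3 X h)).
Proof. extensionality a; extensionality b; extensionality c. unfold act3p, A1, A2, A3, sum4. ring. Qed.
Lemma A12 X Y h : A1 X (A2 Y h) = A2 Y (A1 X h).
Proof. extensionality a; extensionality b; extensionality c. unfold A1, A2, sum4. ring. Qed.
Lemma A13 X Y h : A1 X (A3 Y h) = A3 Y (A1 X h).
Proof. extensionality a; extensionality b; extensionality c. unfold A1, A3, sum4. ring. Qed.
Lemma A23 X Y h : A2 X (A3 Y h) = A3 Y (A2 X h).
Proof. extensionality a; extensionality b; extensionality c. unfold A2, A3, sum4. ring. Qed.
Lemma A1sq X h : cstr X -> forall a l m, (a < 4)%nat -> A1 X (A1 X h) a l m = - h a l m.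
Proof.
  intros HX a l m Ha. transitivity (sum4 (fun k => comp X X k a * h k l m)).
  { unfold A1, comp, sum4. ring. }
  rewrite (sum4_ext _ (fun k => - delta k a * h k l m)) by (intros; rewrite HX by auto; ring).
  case4 a; unfold sum4, delta; simpl; ring.
Qed.
Lemma A2sq X h : cstr X -> forall a l m, (l < 4)%nat -> A2 X (A2 X h) a l m = - h a l m.
Proof.
  intros HX a l m Ha. transitivity (sum4 (fun k => comp X X k l * h a k m)).
  { unfold A2, comp, sum4. ring. }
  rewrite (sum4_ext _ (fun k => - delta k l * h a k m)) by (intros; rewrite HX by auto; ring).
  case4 l; unfold sum4, delta; simpl; ring.
Qed.
Lemma A3sq X h : cstr X -> forall a l m, (m < 4)%nat -> A3 X (A3 X h) a l m = - h a l m.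
Proof.
  intros HX a l m Ha. transitivity (sum4 (fun k => comp X X k m * h a l k)).
  { unfold A3, comp, sum4. ring. }
  rewrite (sum4_ext _ (fun k => - delta k m * h a l k)) by (intros; rewrite HX by auto; ring).
  case4 m; unfold sum4, delta; simpl; ring.
Qed.

Lemma act3_sq X h : cstr X -> forall a b c, (a < 4)%nat -> (b < 4)%nat -> (c < 4)%nat ->
  act3p X (act3p X h) a b c = - h a b c.
Proof.
  intros HX a b c Ha Hb Hc.
  rewrite !act3_A.
  rewrite <- A13, <- A12, <- A23.
  rewrite A1sq, A2sq, A3sq by auto. ring.
Qed.
Lemma wdg_ext t t' w w' : (forall i, (i < 4)%nat -> t i = t' i) -> meq w w' ->
  forall i j k, (i < 4)%nat -> (j < 4)%nat -> (k < 4)%nat -> wdg t w i j k = wdg t' w' i j k.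
Proof. intros H1 H2 i j k Hi Hj Hk. unfold wdg. rewrite !H1, !H2 by auto. ring. Qed.

Definition Vw (a : Vec) (w : Mat) : Vec := fun l => sum4 (fun m => a m * wt w m l).

Lemma V_wdg a1 w1 a2 w2 : antisym4 w1 -> antisym4 w2 ->
  (forall l, (l < 4)%nat -> Vw a1 w1 l = Vw a2 w2 l) ->
  forall i j k, (i < 4)%nat -> (j < 4)%nat -> (k < 4)%nat -> wdg a1 w1 i j k = wdg a2 w2 i j k.
Proof.
  intros H1 H2 HV.
  pose proof (HV 0%nat ltac:(lia)) as V0. pose proof (HV 1%nat ltac:(lia)) as V1.
  pose proof (HV 2%nat ltac:(lia)) as V2. pose proof (HV 3%nat ltac:(lia)) as V3.
  unfold Vw, sum4, wt in V0, V1, V2, V3. simpl in V0, V1, V2, V3.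
  intros i j k Hi Hj Hk.
  (case4 i; case4 j; case4 k; unfold wdg; simpl; lowrw H1; lowrw H2; diagrw H1; diagrw H2; lra).
Qed.

Lemma gray_final g X dg dX : symm4 g -> cstr X -> herm g X -> jdI X dX -> jdH g X dg dX ->
  (forall i j k, (i < 4)%nat -> (j < 4)%nat -> (k < 4)%nat -> nijp X dX i j k = 0) ->
  forall l b c, (l < 4)%nat -> (b < 4)%nat -> (c < 4)%nat ->
  Am g X dg dX l b c = Gr X (Dd (Om g X dg dX)) l b c.
Proof.
  intros Hg HX HH HdI HdH HN l b c Hl Hb Hc.
  assert (Ha : antiJ (Am g X dg dX)) by (intros l' b' c' ? ? ?; apply Am_anti; auto).
  pose proof (gray_abs X (Am g X dg dX) HX Ha (Am_type g X dg dX HX HH HdI)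
      (EN_zero g X dg dX HX HdI HN) l b c Hl Hb Hc) as E.
  unfold Gr.
  rewrite (cyc g X dg dX Hg HX HH HdI HdH l b c) by auto.
  rewrite (sum4_ext (fun m => sum4 (fun n => X m b * X n c * Dd (Om g X dg dX) l m n))
                    (fun m => sum4 (fun n => X m b * X n c * Dc (Am g X dg dX) l m n))).
  2:{ intros m Hm. apply sum4_ext. intros n Hn. rewrite (cyc g X dg dX Hg HX HH HdI HdH l m n) by auto.
      unfold Dc. ring. }
  unfold Dc in *. lra.
Qed.

Definition Tg (gm X : Mat) : Mat := fun b c => sum4 (fun m => gm m b * X m c) - sum4 (fun m => gm m c * X m b).
Definition Tr (A a : Mat) : Mat := fun b c => sum4 (fun k => A k b * a k c) - sum4 (fun k => A k c * a k b).

Lemma Bf_meq v v' w : meq v v' -> Bf v w = Bf v' w.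
Proof. intros H. unfold Bf. rewrite !H by lia. ring. Qed.
Lemma Bf_meq_r v w w' : meq w w' -> Bf v w = Bf v w'.
Proof. intros H. unfold Bf. rewrite !H by lia. ring. Qed.
Lemma Bf_sym v w : Bf v w = Bf w v.
Proof. unfold Bf; ring. Qed.

Lemma Tg_Tr g G gm X : symm4 g -> meq (comp g G) delta -> meq (Tg gm X) (Tr (comp G gm) (comp g X)).
Proof.
  intros Hg HgG b c Hb Hc.
  assert (Hgm : forall m k, (m < 4)%nat -> (k < 4)%nat -> gm m k = comp g (comp G gm) m k).
  { intros m k Hm Hk. rewrite <- comp_assoc. rewrite (meq_compl _ _ _ HgG) by auto.
    rewrite comp_dl by auto. reflexivity. }
  unfold Tg. rewrite (sum4_ext (fun m => gm m b * X m c) (fun m => comp g (comp G gm) m b * X m c))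
    by (intros; rewrite <- Hgm by auto; ring).
  rewrite (sum4_ext (fun m => gm m c * X m b) (fun m => comp g (comp G gm) m c * X m b))
    by (intros; rewrite <- Hgm by auto; ring).
  set (A := comp G gm). clearbody A.
  unfold Tr, comp, sum4. symrw Hg. ring.
Qed.

Lemma deriv_id A a b : antisym4 a -> antisym4 b ->
  Bf (Tr A a) b + Bf a (Tr A b) = sum4 (fun i => A i i) * Bf a b.
Proof.
  intros Ha Hb. unfold Bf, Tr, sum4. simpl. lowrw Ha; lowrw Hb; diagrw Ha; diagrw Hb. ring.
Qed.

Lemma S1_core g I J G gm : symm4 g -> meq (comp g G) delta -> antisym4 (comp g I) -> antisym4 (comp g J) ->
  Bf (comp g I) (comp g J) + 2 * pz I J * Pf (comp g I) = 0 ->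
  Bf (Tg gm I) (comp g J) + Bf (comp g I) (Tg gm J) + 2 * pz I J * Bf (Tg gm I) (comp g I) = 0.
Proof.
  intros Hg HgG HaI HaJ HF.
  rewrite !(Bf_meq _ _ _ (Tg_Tr g G gm I Hg HgG)).
  rewrite (Bf_meq_r _ _ _ (Tg_Tr g G gm J Hg HgG)).
  pose proof (deriv_id (comp G gm) _ _ HaI HaJ) as D1.
  pose proof (deriv_id (comp G gm) _ _ HaI HaI) as D2.
  rewrite (Bf_sym (comp g I) (Tr _ (comp g I))) in D2.
  assert (Bf (comp g I) (comp g I) = 2 * Pf (comp g I)) by (unfold Bf, Pf; ring).
  rewrite H in D2.
  assert (Bf (Tr (comp G gm) (comp g I)) (comp g I) = sum4 (fun i => comp G gm i i) * Pf (comp g I)).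
  { nra. }
  rewrite H0, D1.
  transitivity (sum4 (fun i => comp G gm i i) * (Bf (comp g I) (comp g J) + 2 * pz I J * Pf (comp g I))).
  { ring. }
  rewrite HF. ring.
Qed.

Lemma BW1 g Y G : meq (comp G g) delta -> meq (wt (comp g Y)) (msc (Pf (comp g Y)) (comp Y G)) ->
  forall (a : Vec) l, (l < 4)%nat ->
  Bf (wedge1 a (fun j => g j l)) (comp g Y) = Pf (comp g Y) * sum4 (fun i => a i * Y i l).
Proof.
  intros HGg Hwt a l Hl. rewrite Bf_wedge.
  rewrite (sum4_ext _ (fun i => sum4 (fun j => a i * msc (Pf (comp g Y)) (comp Y G) i j * g j l))).
  2:{ intros i Hi. apply sum4_ext. intros j Hj. rewrite Hwt by auto. ring. }
  transitivity (Pf (comp g Y) * sum4 (fun i => a i * comp (comp Y G) g i l)).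
  { unfold msc, comp, sum4. ring. }
  f_equal. apply sum4_ext. intros i Hi. rewrite comp_assoc.
  rewrite (meq_compr _ _ _ HGg) by auto. rewrite comp_dr by auto. ring.
Qed.

Lemma BW2 g Y Z G : meq (comp G g) delta -> meq (wt (comp g Y)) (msc (Pf (comp g Y)) (comp Y G)) ->
  forall (a : Vec) l, (l < 4)%nat ->
  Bf (wedge1 a (fun j => comp g Z j l)) (comp g Y) = Pf (comp g Y) * sum4 (fun i => a i * comp Y Z i l).
Proof.
  intros HGg Hwt a l Hl. rewrite Bf_wedge.
  rewrite (sum4_ext _ (fun i => sum4 (fun j => a i * msc (Pf (comp g Y)) (comp Y G) i j * comp g Z j l))).
  2:{ intros i Hi. apply sum4_ext. intros j Hj. rewrite Hwt by auto. ring. }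
  transitivity (Pf (comp g Y) * sum4 (fun i => a i * comp Y (comp (comp G g) Z) i l)).
  { unfold msc, comp, sum4. ring. }
  f_equal. apply sum4_ext. intros i Hi.
  rewrite (meq_compr _ _ _ (meq_compl _ _ _ HGg)) by auto.
  rewrite (meq_compr _ _ _ (comp_dl Z)) by auto. ring.
Qed.

Lemma Gr_ext X h h' : (forall a b c, (a < 4)%nat -> (b < 4)%nat -> (c < 4)%nat -> h a b c = h' a b c) ->
  forall l b c, (l < 4)%nat -> (b < 4)%nat -> (c < 4)%nat -> Gr X h l b c = Gr X h' l b c.
Proof.
  intros H l b c Hl Hb Hc. unfold Gr. rewrite H by auto.
  rewrite (sum4_ext (fun m => sum4 (fun n => X m b * X n c * h l m n)) (fun m => sum4 (fun n => X m b * X n c * h' l m n))). reflexivity.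
   intros m Hm; apply sum4_ext; intros n Hn. rewrite H by auto. ring.
Qed.

Lemma vm_vm X (t : Vec) : cstr X -> forall i, (i < 4)%nat -> vm (vm t X) X i = - t i.
Proof.
  intros HX i Hi.
  pose proof (lII X HX) as _.
  transitivity (sum4 (fun k => t k * comp X X k i)); [unfold vm, comp, sum4; ring|].
  pose proof (rII X HX t i Hi). lra.
Qed.

Lemma DdJ_formula g I J th dg dI dJ :
  symm4 g -> posdef g -> cstr I -> herm g I -> cstr J -> herm g J -> nondeg I J ->
  (forall i j k, (i < 4)%nat -> (j < 4)%nat -> (k < 4)%nat -> Dd (Om g I dg dI) i j k = wdg th (comp g I) i j k) ->
  (forall a b c, (a < 4)%nat -> (b < 4)%nat -> (c < 4)%nat ->
     act3p I (Dd (Om g I dg dI)) a b c + act3p J (Dd (Om g J dg dJ)) a b c = 0) ->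
  forall a b c, (a < 4)%nat -> (b < 4)%nat -> (c < 4)%nat ->
  Dd (Om g J dg dJ) a b c = wdg (fun i => - th i) (comp g J) a b c.
Proof.
  intros Hg Hp HI HHI HJ HHJ Hnd HL Hc.
  destruct (orient g I J Hg Hp HI HHI HJ HHJ Hnd) as [HPf [HF0 HS]].
  set (G := Ginv g I). pose proof (Ginv_l g I Hg Hp HI HHI) as HGg. fold G in HGg.
  pose proof (w_anti g I Hg HI HHI) as HaI. pose proof (w_anti g J Hg HJ HHJ) as HaJ.
  pose proof (wt_formula g I G HI HaI HGg) as HwI.
  pose proof (wt_formula g J G HJ HaJ HGg) as HwJ.
  assert (HV : forall l, (l < 4)%nat -> Vw (vm th I) (comp g I) l = Vw (vm th J) (comp g J) l).
  { assert (Gen : forall X, cstr X -> meq (wt (comp g X)) (msc (Pf (comp g X)) (comp X G)) ->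
        forall l, (l < 4)%nat -> Vw (vm th X) (comp g X) l = - Pf (comp g X) * sum4 (fun k => th k * G k l)).
    { intros X HX Hw l Hl. unfold Vw.
      rewrite (sum4_ext _ (fun m => vm th X m * msc (Pf (comp g X)) (comp X G) m l))
        by (intros; rewrite Hw by auto; ring).
      transitivity (Pf (comp g X) * sum4 (fun k => th k * comp (comp X X) G k l)).
      { unfold vm, msc, comp, sum4. ring. }
      rewrite (sum4_ext (fun k => th k * comp (comp X X) G k l) (fun k => th k * (- G k l))).
      2:{ intros k Hk. rewrite (meq_compl _ _ _ (cstr_meq X HX)) by auto. unfold mneg1.
          rewrite comp_scl'. rewrite comp_dl by auto. ring. }
      unfold sum4; ring. }
    intros l Hl. rewrite (Gen I HI HwI l Hl), (Gen J HJ HwJ l Hl), HPf. reflexivity. }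
  assert (H3 : forall k l m, (k < 4)%nat -> (l < 4)%nat -> (m < 4)%nat ->
     act3p J (Dd (Om g J dg dJ)) k l m = - wdg (vm th J) (comp g J) k l m).
  { intros k l m Hk Hl Hm.
    assert (E : act3p J (Dd (Om g J dg dJ)) k l m = - act3p I (Dd (Om g I dg dI)) k l m)
      by (pose proof (Hc k l m Hk Hl Hm); lra).
    rewrite E. f_equal.
    rewrite (act3_ext I _ (wdg th (comp g I)) HL). rewrite act3_wdg.
    rewrite (wdg_ext (vm th I) (vm th I) (act2p I (comp g I)) (comp g I)) by (auto; apply w_inv; auto).
    apply V_wdg; auto. }
  intros a b c Ha Hb Hc'.
  pose proof (act3_sq J (Dd (Om g J dg dJ)) HJ a b c Ha Hb Hc') as E.
  rewrite (act3_ext J _ (fun k l m => - wdg (vm th J) (comp g J) k l m) H3) in E.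
  assert (E2 : act3p J (fun k l m => - wdg (vm th J) (comp g J) k l m) a b c = - wdg (fun i => - th i) (comp g J) a b c).
  { transitivity (- act3p J (wdg (vm th J) (comp g J)) a b c).
    { unfold act3p, sum4. ring. }
    rewrite act3_wdg.
    rewrite (wdg_ext (vm (vm th J) J) (fun i => - th i) (act2p J (comp g J)) (comp g J)) by
      (auto; try apply w_inv; auto; intros; apply vm_vm; auto).
    reflexivity. }
  lra.
Qed.

Lemma Bf_lin v w u : Bf (fun b c => v b c + w b c) u = Bf v u + Bf w u.
Proof. unfold Bf; ring. Qed.

Lemma key g I J th dg dI dJ (dp : Vec) :
  symm4 g -> posdef g -> cstr I -> herm g I -> cstr J -> herm g J -> nondeg I J ->
  jdI I dI -> jdH g I dg dI -> jdI J dJ -> jdH g J dg dJ ->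
  (forall i j k, (i < 4)%nat -> (j < 4)%nat -> (k < 4)%nat -> nijp I dI i j k = 0) ->
  (forall i j k, (i < 4)%nat -> (j < 4)%nat -> (k < 4)%nat -> nijp J dJ i j k = 0) ->
  (forall i j k, (i < 4)%nat -> (j < 4)%nat -> (k < 4)%nat -> Dd (Om g I dg dI) i j k = wdg th (comp g I) i j k) ->
  (forall a b c, (a < 4)%nat -> (b < 4)%nat -> (c < 4)%nat ->
     act3p I (Dd (Om g I dg dI)) a b c + act3p J (Dd (Om g J dg dJ)) a b c = 0) ->
  (forall l, (l < 4)%nat -> Bf (Om g I dg dI l) (comp g J) + Bf (comp g I) (Om g J dg dJ l)
      + dp l * Bf (comp g I) (comp g I) + 2 * pz I J * Bf (Om g I dg dI l) (comp g I) = 0) ->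
  forall l, (l < 4)%nat -> dp l = / 2 * sum4 (fun i => th i * commut I J i l).
Proof.
  intros Hg Hp HI HHI HJ HHJ Hnd HdI HdHI HdJ HdHJ HNI HNJ HL Hc HdF l Hl.
  destruct (orient g I J Hg Hp HI HHI HJ HHJ Hnd) as [HPf [HF0 HS]].
  pose proof (Pf_nz g I Hg Hp HI HHI) as Hnz.
  set (G := Ginv g I). pose proof (Ginv_l g I Hg Hp HI HHI) as HGg. fold G in HGg.
  pose proof (Ginv_r g I Hg Hp HI HHI) as HgG. fold G in HgG.
  pose proof (w_anti g I Hg HI HHI) as HaI. pose proof (w_anti g J Hg HJ HHJ) as HaJ.
  pose proof (wt_formula g I G HI HaI HGg) as HwI.
  pose proof (wt_formula g J G HJ HaJ HGg) as HwJ.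
  set (gm := fun m b => Gm dg m l b).
  assert (HOI : meq (Om g I dg dI l) (fun b c => Am g I dg dI l b c + Tg gm I b c))
    by (intros b c _ _; unfold Am, Tg, gm; ring).
  assert (HOJ : meq (Om g J dg dJ l) (fun b c => Am g J dg dJ l b c + Tg gm J b c))
    by (intros b c _ _; unfold Am, Tg, gm; ring).
  pose proof (S1_core g I J G gm Hg HgG HaI HaJ HF0) as HS1.
  assert (HAI : meq (Am g I dg dI l)
     (fun b c => / 2 * (wedge1 th (fun c => comp g I c l) b c - wedge1 (vm th I) (fun c => g c l) b c))).
  { intros b c Hb Hc'. rewrite gray_final by auto. rewrite (Gr_ext I _ (wdg th (comp g I)) HL) by auto.
    apply Gr_wdg; auto. }
  assert (HAJ : meq (Am g J dg dJ l)
     (fun b c => / 2 * (wedge1 (fun i => - th i) (fun c => comp g J c l) b c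
                        - wedge1 (vm (fun i => - th i) J) (fun c => g c l) b c))).
  { intros b c Hb Hc'. rewrite gray_final by auto.
    rewrite (Gr_ext J _ (wdg (fun i => - th i) (comp g J))) by (auto; intros; apply (DdJ_formula g I J th dg dI dJ); auto).
    apply Gr_wdg; auto. }
  assert (Lin : forall (v1 v2 : Mat) w, Bf (fun b c => / 2 * (v1 b c - v2 b c)) w = / 2 * (Bf v1 w - Bf v2 w))
    by (intros; unfold Bf; ring).
  assert (B1 : Bf (Am g I dg dI l) (comp g J) =
     / 2 * (Pf (comp g J) * sum4 (fun i => th i * comp J I i l)
            - Pf (comp g J) * sum4 (fun i => vm th I i * J i l))).
  { rewrite (Bf_meq _ _ _ HAI), Lin. rewrite (BW2 g J I G HGg HwJ th l Hl), (BW1 g J G HGg HwJ (vm th I) l Hl). reflexivity. }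
  assert (B2 : Bf (Am g J dg dJ l) (comp g I) =
     / 2 * (Pf (comp g I) * sum4 (fun i => - th i * comp I J i l)
            - Pf (comp g I) * sum4 (fun i => vm (fun i => - th i) J i * I i l))).
  { rewrite (Bf_meq _ _ _ HAJ), Lin. rewrite (BW2 g I J G HGg HwI (fun i => - th i) l Hl),
      (BW1 g I G HGg HwI (vm (fun i => - th i) J) l Hl). reflexivity. }
  assert (B3 : Bf (Am g I dg dI l) (comp g I) =
     / 2 * (Pf (comp g I) * sum4 (fun i => th i * comp I I i l)
            - Pf (comp g I) * sum4 (fun i => vm th I i * I i l))).
  { rewrite (Bf_meq _ _ _ HAI), Lin. rewrite (BW2 g I I G HGg HwI th l Hl), (BW1 g I G HGg HwI (vm th I) l Hl). reflexivity. }
  assert (B3' : Bf (Am g I dg dI l) (comp g I) = 0).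
  { rewrite B3. unfold vm, comp, sum4. ring. }
  pose proof (HdF l Hl) as D.
  rewrite (Bf_meq _ _ _ HOI), Bf_lin in D.
  rewrite (Bf_meq_r _ _ _ HOJ) in D. rewrite (Bf_sym (comp g I) (fun b c => _ + _)), Bf_lin in D.
  rewrite (Bf_meq (Om g I dg dI l) _ (comp g I) HOI), Bf_lin in D.
  rewrite B1, B2, B3' in D.
  rewrite (Bf_sym (Tg gm J) (comp g I)) in D.
  assert (BB : Bf (comp g I) (comp g I) = 2 * Pf (comp g I)) by (unfold Bf, Pf; ring).
  rewrite BB in D. rewrite <- HPf in D.
  set (P := Pf (comp g I)) in *.
  assert (T : Bf (Tg gm I) (comp g J) + Bf (comp g I) (Tg gm J) + 2 * pz I J * Bf (Tg gm I) (comp g I) = 0) by exact HS1.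
  assert (K : dp l * (2 * P) = P * (sum4 (fun i => th i * commut I J i l))).
  { assert (Q : / 2 * (P * sum4 (fun i => th i * comp J I i l) - P * sum4 (fun i => vm th I i * J i l)) +
       / 2 * (P * sum4 (fun i => - th i * comp I J i l) - P * sum4 (fun i => vm (fun i => - th i) J i * I i l))
       = - P * sum4 (fun i => th i * commut I J i l)).
    { unfold vm, commut, comp, sum4. field. }
    nra. }
  apply (Rmult_eq_reg_l (2 * P)). 2: lra.
  rewrite Rmult_comm, K. field.
Qed.

Definition D (f : pt -> R) (l : nat) (x : pt) (L : R) :=
  derivable_pt_lim (fun t => f (shift x l t)) 0 L.

Lemma shift0 x l : shift x l 0 = x.
Proof.
  destruct x as [[[a b] c] d].
  destruct l as [|[|[|[|l]]]]; simpl; repeat f_equal; ring.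
Qed.

Lemma D_plus f h l x L1 L2 : D f l x L1 -> D h l x L2 -> D (fun y => f y + h y) l x (L1 + L2).
Proof. intros H1 H2. unfold D. apply (derivable_pt_lim_plus _ _ _ _ _ H1 H2). Qed.
Lemma D_minus f h l x L1 L2 : D f l x L1 -> D h l x L2 -> D (fun y => f y - h y) l x (L1 - L2).
Proof. intros H1 H2. unfold D. apply (derivable_pt_lim_minus _ _ _ _ _ H1 H2). Qed.
Lemma D_opp f l x L : D f l x L -> D (fun y => - f y) l x (- L).
Proof. intros H. unfold D. apply (derivable_pt_lim_opp _ _ _ H). Qed.
Lemma D_mult f h l x L1 L2 : D f l x L1 -> D h l x L2 -> D (fun y => f y * h y) l x (L1 * h x + f x * L2).
Proof.
  intros H1 H2. unfold D. pose proof (derivable_pt_lim_mult _ _ _ _ _ H1 H2) as H.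
  simpl in H. rewrite shift0 in H. exact H.
Qed.
Lemma D_const (c : R) l x : D (fun _ => c) l x 0.
Proof. unfold D. apply (derivable_pt_lim_const c 0). Qed.

Lemma D_pd f l x L : D f l x L -> pd f l x = L.
Proof.
  intros H. unfold pd. apply (uniqueness_limite (fun t => f (shift x l t)) 0).
  - apply epsilon_spec. exists L; exact H.
  - exact H.
Qed.
Lemma D_uniq f l x L1 L2 : D f l x L1 -> D f l x L2 -> L1 = L2.
Proof. intros H1 H2. apply (uniqueness_limite _ _ _ _ H1 H2). Qed.
Lemma D_of_ex f l x : (exists L, D f l x L) -> D f l x (pd f l x).
Proof.
  intros [L H]. rewrite (D_pd f l x L H). exact H.
Qed.

Lemma close_shift x l t del : 0 < del -> Rabs t < del -> close (shift x l t) x del.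
Proof.
  intros Hd Ht i Hi. destruct x as [[[a b] c] d].
  destruct l as [|[|[|[|l]]]]; destruct i as [|[|[|[|i]]]]; simpl;
   try (replace (a + t - a) with t by ring); try (replace (b + t - b) with t by ring);
   try (replace (c + t - c) with t by ring); try (replace (d + t - d) with t by ring);
   try (rewrite Rminus_diag, Rabs_R0); auto; lia.
Qed.

Lemma D_local U f h l x L : is_open U -> U x -> (forall y, U y -> f y = h y) -> D h l x L -> D f l x L.
Proof.
  intros HU Hx Hfh Hh eps Heps.
  destruct (HU x Hx) as [del [Hdel Hcl]].
  destruct (Hh eps Heps) as [dl Hdl].
  assert (Hpos : 0 < Rmin dl del) by (apply Rmin_pos; [apply cond_pos | auto]).
  exists (mkposreal _ Hpos). intros t Ht0 Ht. simpl in Ht.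
  rewrite (Hfh (shift x l (0 + t))).
  2:{ apply Hcl. apply close_shift; auto. rewrite Rplus_0_l. apply (Rlt_le_trans _ _ _ Ht). apply Rmin_r. }
  rewrite (Hfh (shift x l 0)).
  2:{ rewrite shift0. auto. }
  apply Hdl; auto. apply (Rlt_le_trans _ _ _ Ht). apply Rmin_l.
Qed.

Lemma smooth_D U (A : field2) i j : smooth_field2 U A -> (i < 4)%nat -> (j < 4)%nat ->
  forall x l, U x -> (l < 4)%nat -> D (fun y => A y i j) l x (pd (fun y => A y i j) l x).
Proof.
  intros HA Hi Hj x l Hx Hl. apply D_of_ex.
  destruct (HA i j Hi Hj 1%nat) as [_ Hd]. destruct (Hd l Hl) as [Hex _].
  destruct (Hex x Hx) as [L HL]. exists L. exact HL.
Qed.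

Lemma D_ext f l x L1 L2 : D f l x L1 -> L1 = L2 -> D f l x L2.
Proof. intros H ->; exact H. Qed.

Ltac dtac Hat := repeat (first [ Hat | apply D_plus | apply D_minus | apply D_opp | apply D_mult | apply D_const ]).

Definition jet (X : field2) (x : pt) : Jet := fun l i j => pd (fun y => X y i j) l x.

Lemma DXA U X x : smooth_field2 U X -> U x ->
  forall l i j, (l < 4)%nat -> (i < 4)%nat -> (j < 4)%nat -> D (fun y => X y i j) l x (jet X x l i j).
Proof. intros; apply (smooth_D U X); auto. Qed.

Lemma jdI_of U X x : is_open U -> U x -> smooth_field2 U X -> (forall y, U y -> cstr (X y)) ->
  jdI (X x) (jet X x).
Proof.
  intros HU Hx Hs Hc l i j Hl Hi Hj.
  assert (D1 : D (fun y => comp (X y) (X y) i j) l x (edI (X x) (jet X x) l i j)).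
  { eapply D_ext. unfold comp, sum4. dtac ltac:(apply (DXA U X x Hs Hx); lia).
    cbv beta. unfold edI, sum4. ring. }
  assert (D2 : D (fun y => comp (X y) (X y) i j) l x 0).
  { apply (D_local U _ (fun _ => - delta i j)); auto. intros y Hy; apply Hc; auto. apply D_const. }
  apply (D_uniq _ _ _ _ _ D1 D2).
Qed.

Lemma dg_sym U g x : is_open U -> U x -> smooth_field2 U g ->
  (forall y, U y -> forall i j, (i < 4)%nat -> (j < 4)%nat -> g y i j = g y j i) ->
  forall l i j, (l < 4)%nat -> (i < 4)%nat -> (j < 4)%nat -> jet g x l i j = jet g x l j i.
Proof.
  intros HU Hx Hs Hsy l i j Hl Hi Hj.
  apply (D_uniq (fun y => g y i j) l x). apply (DXA U g x); auto.
  apply (D_local U _ (fun y => g y j i)); auto. apply (DXA U g x); auto.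
Qed.

Lemma dgs_eq U g x : is_open U -> U x -> smooth_field2 U g ->
  (forall y, U y -> forall i j, (i < 4)%nat -> (j < 4)%nat -> g y i j = g y j i) ->
  forall l i j, (l < 4)%nat -> (i < 4)%nat -> (j < 4)%nat -> dgs (jet g x) l i j = jet g x l i j.
Proof.
  intros HU Hx Hs Hsy l i j Hl Hi Hj. unfold dgs.
  rewrite (dg_sym U g x HU Hx Hs Hsy l j i) by auto. field.
Qed.

Lemma jdH_of U g X x : is_open U -> U x -> smooth_field2 U g -> smooth_field2 U X ->
  (forall y, U y -> forall i j, (i < 4)%nat -> (j < 4)%nat -> g y i j = g y j i) ->
  (forall y, U y -> herm (g y) (X y)) -> jdH (g x) (X x) (jet g x) (jet X x).
Proof.
  intros HU Hx Hgs HXs Hsy Hh l i j Hl Hi Hj.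
  set (L := sum4 (fun k => sum4 (fun m => jet X x l k i * X x m j * g x k m + X x k i * jet X x l m j * g x k m
                                        + X x k i * X x m j * jet g x l k m))).
  assert (D1 : D (fun y => sum4 (fun k => sum4 (fun m => X y k i * X y m j * g y k m))) l x L).
  { eapply D_ext. unfold sum4.
    dtac ltac:(first [apply (DXA U X x HXs Hx); lia | apply (DXA U g x Hgs Hx); lia]).
    cbv beta. unfold L, sum4. ring. }
  assert (D2 : D (fun y => sum4 (fun k => sum4 (fun m => X y k i * X y m j * g y k m))) l x (jet g x l i j)).
  { apply (D_local U _ (fun y => g y i j)); auto. intros y Hy; apply Hh; auto. apply (DXA U g x); auto. }
  pose proof (D_uniq _ _ _ _ _ D1 D2) as E.
  unfold edH. rewrite (dgs_eq U g x HU Hx Hgs Hsy l i j) by auto.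
  rewrite <- E. unfold L. apply Rminus_diag_eq. apply sum4_ext. intros k Hk. apply sum4_ext. intros m Hm.
  rewrite (dgs_eq U g x HU Hx Hgs Hsy l k m) by auto. ring.
Qed.

Lemma Om_eq U g X x : is_open U -> U x -> smooth_field2 U g ->
  (forall y, U y -> forall i j, (i < 4)%nat -> (j < 4)%nat -> g y i j = g y j i) ->
  forall l j k, (l < 4)%nat -> (j < 4)%nat -> (k < 4)%nat ->
  Om (g x) (X x) (jet g x) (jet X x) l j k = sum4 (fun m => jet g x l j m * X x m k + g x j m * jet X x l m k).
Proof.
  intros HU Hx Hgs Hsy l j k Hl Hj Hk. unfold Om. apply sum4_ext. intros m Hm.
  rewrite (dgs_eq U g x HU Hx Hgs Hsy l j m) by auto. ring.
Qed.

Lemma Dw U g X x : is_open U -> U x -> smooth_field2 U g -> smooth_field2 U X ->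
  (forall y, U y -> forall i j, (i < 4)%nat -> (j < 4)%nat -> g y i j = g y j i) ->
  forall l j k, (l < 4)%nat -> (j < 4)%nat -> (k < 4)%nat ->
  D (fun y => omega_of g X y j k) l x (Om (g x) (X x) (jet g x) (jet X x) l j k).
Proof.
  intros HU Hx Hgs HXs Hsy l j k Hl Hj Hk.
  eapply D_ext. unfold omega_of, sum4.
  dtac ltac:(first [apply (DXA U X x HXs Hx); lia | apply (DXA U g x Hgs Hx); lia]).
  cbv beta. rewrite (Om_eq U g X x) by auto. unfold sum4. ring.
Qed.

Lemma pd_w U g X x : is_open U -> U x -> smooth_field2 U g -> smooth_field2 U X ->
  (forall y, U y -> forall i j, (i < 4)%nat -> (j < 4)%nat -> g y i j = g y j i) ->
  forall l j k, (l < 4)%nat -> (j < 4)%nat -> (k < 4)%nat ->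
  pd (fun y => omega_of g X y j k) l x = Om (g x) (X x) (jet g x) (jet X x) l j k.
Proof. intros. apply D_pd. apply (Dw U); auto. Qed.

Lemma pd_act2 U g X x : is_open U -> U x -> smooth_field2 U g -> smooth_field2 U X ->
  (forall y, U y -> forall i j, (i < 4)%nat -> (j < 4)%nat -> g y i j = g y j i) ->
  (forall y, U y -> cstr (X y)) -> (forall y, U y -> herm (g y) (X y)) ->
  forall l j k, (l < 4)%nat -> (j < 4)%nat -> (k < 4)%nat ->
  pd (fun y => act2 X (omega_of g X) y j k) l x = Om (g x) (X x) (jet g x) (jet X x) l j k.
Proof.
  intros HU Hx Hgs HXs Hsy Hc Hh l j k Hl Hj Hk. apply D_pd.
  apply (D_local U _ (fun y => omega_of g X y j k)); auto.
  - intros y Hy. change (act2p (X y) (comp (g y) (X y)) j k = comp (g y) (X y) j k).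
    apply w_inv; auto. intros i' j' Hi' Hj'; apply Hsy; auto.
  - apply (Dw U); auto.
Qed.

Lemma dc_formula U g X x : is_open U -> U x -> smooth_field2 U g -> smooth_field2 U X ->
  (forall y, U y -> forall i j, (i < 4)%nat -> (j < 4)%nat -> g y i j = g y j i) ->
  (forall y, U y -> cstr (X y)) -> (forall y, U y -> herm (g y) (X y)) ->
  forall a b c, dc X (omega_of g X) x a b c = - act3p (X x) (Dd (Om (g x) (X x) (jet g x) (jet X x))) a b c.
Proof.
  intros HU Hx Hgs HXs Hsy Hc Hh a b c. unfold dc, act3, act3p. f_equal.
  apply sum4_ext; intros k Hk. apply sum4_ext; intros l Hl. apply sum4_ext; intros m Hm.
  unfold d2, Dd. rewrite !(pd_act2 U g X x) by auto. ring.
Qed.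

Lemma d2_formula U g X x : is_open U -> U x -> smooth_field2 U g -> smooth_field2 U X ->
  (forall y, U y -> forall i j, (i < 4)%nat -> (j < 4)%nat -> g y i j = g y j i) ->
  forall i j k, (i < 4)%nat -> (j < 4)%nat -> (k < 4)%nat ->
  d2 (omega_of g X) x i j k = Dd (Om (g x) (X x) (jet g x) (jet X x)) i j k.
Proof.
  intros HU Hx Hgs HXs Hsy i j k Hi Hj Hk. unfold d2, Dd. rewrite !(pd_w U g X x) by auto. ring.
Qed.

Theorem lemma3p11 (U : pt -> Prop) (g I J : field2) (theta : field1) :
  is_open U -> GK U g I J -> nondegenerate U I J -> lee_form U g I theta ->
  forall x, U x -> forall a, (a < 4)%nat ->
    theta x a =
      / (2 * (angle I J x ^ 2 - 1)) *
      sum4 (fun i => d0 (angle I J) x i * commut (I x) (J x) i a).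
Proof.
  intros HU HGK Hnd Hlee x Hx a Ha.
  destruct HGK as [[Hgsm [Hgs Hgp]] [[HIsm [HI2 HIN]] [[HJsm [HJ2 HJN]] [HhI [HhJ [H [HH1 HH2]]]]]]].
  assert (Pg : forall y, U y -> symm4 (g y)) by (intros y Hy i j Hi Hj; apply Hgs; auto).
  assert (Pp : forall y, U y -> posdef (g y)) by (intros y Hy; exact (Hgp y Hy)).
  assert (PI : forall y, U y -> cstr (I y)) by (intros y Hy; exact (HI2 y Hy)).
  assert (PJ : forall y, U y -> cstr (J y)) by (intros y Hy; exact (HJ2 y Hy)).
  assert (PhI : forall y, U y -> herm (g y) (I y)) by (intros y Hy; exact (HhI y Hy)).
  assert (PhJ : forall y, U y -> herm (g y) (J y)) by (intros y Hy; exact (HhJ y Hy)).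
  assert (Pnd : forall y, U y -> nondeg (I y) (J y)) by (intros y Hy; exact (Hnd y Hy)).
  assert (Hsy : forall y, U y -> forall i j, (i < 4)%nat -> (j < 4)%nat -> g y i j = g y j i)
    by (intros; apply Hgs; auto).
  assert (HL : forall i j k, (i < 4)%nat -> (j < 4)%nat -> (k < 4)%nat ->
     Dd (Om (g x) (I x) (jet g x) (jet I x)) i j k = wdg (theta x) (comp (g x) (I x)) i j k).
  { intros i j k Hi Hj Hk. rewrite <- (d2_formula U g I x) by auto. apply Hlee; auto. }
  assert (Hc : forall a b c, (a < 4)%nat -> (b < 4)%nat -> (c < 4)%nat ->
     act3p (I x) (Dd (Om (g x) (I x) (jet g x) (jet I x))) a b c
     + act3p (J x) (Dd (Om (g x) (J x) (jet g x) (jet J x))) a b c = 0).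
  { intros a' b c Ha' Hb Hc. destruct (HH1 x Hx a' b c Ha' Hb Hc) as [E1 E2].
    rewrite (dc_formula U g I x) in E1 by auto. rewrite (dc_formula U g J x) in E2 by auto. lra. }
  assert (Dang : forall l, (l < 4)%nat -> D (fun y => angle I J y) l x (pd (angle I J) l x)).
  { intros l Hl. apply D_of_ex. eexists. unfold angle, comp, sum4.
    dtac ltac:(first [apply (DXA U I x HIsm Hx); lia | apply (DXA U J x HJsm Hx); lia]). }
  assert (HdF : forall l, (l < 4)%nat ->
     Bf (Om (g x) (I x) (jet g x) (jet I x) l) (comp (g x) (J x))
     + Bf (comp (g x) (I x)) (Om (g x) (J x) (jet g x) (jet J x) l)
     + pd (angle I J) l x * Bf (comp (g x) (I x)) (comp (g x) (I x))
     + 2 * pz (I x) (J x) * Bf (Om (g x) (I x) (jet g x) (jet I x) l) (comp (g x) (I x)) = 0).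
  { intros l Hl.
    set (Fy := fun y => Bf (omega_of g I y) (omega_of g J y) + angle I J y * Bf (omega_of g I y) (omega_of g I y)).
    assert (D1 : D Fy l x 0).
    { apply (D_local U _ (fun _ => 0)); auto. 2: apply D_const.
      intros y Hy. unfold Fy.
      destruct (orient (g y) (I y) (J y) (Pg y Hy) (Pp y Hy) (PI y Hy) (PhI y Hy) (PJ y Hy) (PhJ y Hy) (Pnd y Hy))
        as [_ [HF0 _]].
      change (Bf (comp (g y) (I y)) (comp (g y) (J y)) + pz (I y) (J y) * Bf (comp (g y) (I y)) (comp (g y) (I y)) = 0).
      assert (Bf (comp (g y) (I y)) (comp (g y) (I y)) = 2 * Pf (comp (g y) (I y))) by (unfold Bf, Pf; ring).
      rewrite H0. lra. }
    assert (D2 : D Fy l x (Bf (Om (g x) (I x) (jet g x) (jet I x) l) (comp (g x) (J x))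
     + Bf (comp (g x) (I x)) (Om (g x) (J x) (jet g x) (jet J x) l)
     + pd (angle I J) l x * Bf (comp (g x) (I x)) (comp (g x) (I x))
     + 2 * pz (I x) (J x) * Bf (Om (g x) (I x) (jet g x) (jet I x) l) (comp (g x) (I x)))).
    { eapply D_ext. unfold Fy, Bf.
      dtac ltac:(first [apply (Dw U g I x); auto; lia | apply (Dw U g J x); auto; lia | apply Dang; auto]).
      cbv beta. unfold Bf, omega_of, angle, pz, comp. ring. }
    rewrite <- (D_uniq _ _ _ _ _ D1 D2). reflexivity. }
  pose proof (key (g x) (I x) (J x) (theta x) (jet g x) (jet I x) (jet J x) (fun l => pd (angle I J) l x)
     (Pg x Hx) (Pp x Hx) (PI x Hx) (PhI x Hx) (PJ x Hx) (PhJ x Hx) (Pnd x Hx)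
     (jdI_of U I x HU Hx HIsm PI) (jdH_of U g I x HU Hx Hgsm HIsm Hsy PhI)
     (jdI_of U J x HU Hx HJsm PJ) (jdH_of U g J x HU Hx Hgsm HJsm Hsy PhJ)
     (fun i j k Hi Hj Hk => HIN x Hx i j k Hi Hj Hk) (fun i j k Hi Hj Hk => HJN x Hx i j k Hi Hj Hk)
     HL Hc HdF) as Key.
  destruct (orient (g x) (I x) (J x) (Pg x Hx) (Pp x Hx) (PI x Hx) (PhI x Hx) (PJ x Hx) (PhJ x Hx) (Pnd x Hx))
    as [_ [_ HS]].
  pose proof (C2 (I x) (J x) (PI x Hx) (PJ x Hx) HS) as HC2.
  pose proof (p2_ne1 (I x) (J x) (Pnd x Hx) HC2) as Hp1.
  change (angle I J x) with (pz (I x) (J x)).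
  set (p := pz (I x) (J x)) in *.
  unfold d0.
  rewrite (sum4_ext _ (fun i => (/ 2 * sum4 (fun k => theta x k * commut (I x) (J x) k i)) * commut (I x) (J x) i a))
    by (intros; rewrite Key by auto; ring).
  transitivity (/ (2 * (p ^ 2 - 1)) * (/ 2 * sum4 (fun k => theta x k * comp (commut (I x) (J x)) (commut (I x) (J x)) k a))).
  2:{ f_equal. unfold comp, sum4. ring. }
  rewrite (sum4_ext _ (fun k => theta x k * (4 * (p ^ 2 - 1) * delta k a))) by (intros; rewrite HC2 by auto; ring).
  case4 a; unfold sum4, delta; simpl; field.
  all: intro Hc0; apply Hp1; rewrite <- Hc0; ring.
Qed.
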